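(* Let $k\ge 1$ and assume that the block residuals $R_0,\dots,R_{k-1}$ produced by the BCG algorithm all have full column rank, so that all quantities up to $X_k,R_k$ are well defined. Then $$\mathfrak{E}_{k-1}=\Theta_{k-1}+\mathfrak{E}_{k},$$ and the matrix $\Theta_{k-1}=(R_{k-1}^TR_{k-1})\Upsilon_{k-1}$ is symmetric and positive definite. In particular, for each $i=1,\dots,m$, $$\|x^{(i)}-x^{(i)}_{k-1}\|_A^2=(\Theta_{k-1})_{i,i}+\|x^{(i)}-x^{(i)}_{k}\|_A^2\ \ge\ (\Theta_{k-1})_{i,i}>0,$$ where $x^{(i)}$ and $x^{(i)}_j$ denote the $i$th columns of $X$ and $X_j$.
   Context: Let $A\in\mathbb{R}^{n\times n}$ be symmetric positive definite, let $B,X_0\in\mathbb{R}^{n\times m}$, and let $X=A^{-1}B$. The block conjugate gradient (BCG) algorithm sets $R_0=B-AX_0$, $P_0=R_0$, and for $k=1,2,\dots$: $\Upsilon_{k-1}=(P_{k-1}^TAP_{k-1})^{-1}(R_{k-1}^TR_{k-1})$, $X_k=X_{k-1}+P_{k-1}\Upsilon_{k-1}$, $R_k=R_{k-1}-AP_{k-1}\Upsilon_{k-1}$, $\Xi_k=(R_{k-1}^TR_{k-1})^{-1}(R_k^TR_k)$, $P_k=R_k+P_{k-1}\Xi_k$. Define $\mathfrak{E}_k=(X-X_k)^TA(X-X_k)$ and $\Theta_k=(R_k^TR_k)\Upsilon_k$. For a vector $y$, $\|y\|_A=(y^TAy)^{1/2}$. *)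

(* Defs.v *)
From HB Require Import structures.
From mathcomp Require Import all_boot all_order all_algebra.
Set Implicit Arguments. Unset Strict Implicit. Unset Printing Implicit Defensive.
Import Order.TTheory GRing.Theory Num.Theory.
Local Open Scope ring_scope.

Section BCG.
Variable R : realFieldType.

Definition spd (p : nat) (M : 'M[R]_p) : Prop :=
  M^T = M /\ forall v : 'cV[R]_p, v != 0 -> 0 < (v^T *m M *m v) 0 0.

Variables (n m : nat) (A : 'M[R]_n) (B X0 : 'M[R]_(n, m)).

Definition bcg_step (s : 'M[R]_(n, m) * 'M[R]_(n, m) * 'M[R]_(n, m)) :=
  let: (Xk, Rk, Pk) := s in
  let Ups := invmx (Pk^T *m A *m Pk) *m (Rk^T *m Rk) in
  let Xk' := Xk + Pk *m Ups in
  let Rk' := Rk - A *m Pk *m Ups in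
  let Xi := invmx (Rk^T *m Rk) *m (Rk'^T *m Rk') in
  let Pk' := Rk' + Pk *m Xi in
  (Xk', Rk', Pk').

Definition bcg_state (k : nat) :=
  iter k bcg_step (X0, B - A *m X0, B - A *m X0).

Definition bcgX k := (bcg_state k).1.1.
Definition bcgR k := (bcg_state k).1.2.
Definition bcgP k := (bcg_state k).2.

Definition bcgUps k :=
  invmx ((bcgP k)^T *m A *m bcgP k) *m ((bcgR k)^T *m bcgR k).

Definition bcgTheta k := ((bcgR k)^T *m bcgR k) *m bcgUps k.

Definition bcgXsol := invmx A *m B.

Definition bcgErr k :=
  (bcgXsol - bcgX k)^T *m A *m (bcgXsol - bcgX k).

End BCG.

Definition Anorm2 (R : realFieldType) (n : nat) (A : 'M[R]_n) (y : 'cV[R]_n) : R :=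
  (y^T *m A *m y) 0 0.

(* Main.v *)
Require Import Defs.
From HB Require Import structures.
From mathcomp Require Import all_boot all_order all_algebra.
Import Order.TTheory GRing.Theory Num.Theory.
Local Open Scope ring_scope.
Set Implicit Arguments. Unset Strict Implicit.

Section H.
Variable R : realFieldType.

Lemma vtv_pos p (w : 'cV[R]_p) : w != 0 -> 0 < (w^T *m w) 0 0.
Proof.
move=> wn0.
have nn : forall k, xpredT k -> 0 <= (w^T) 0 k * w k 0.
  by move=> k _; rewrite !mxE -expr2 sqr_ge0.
rewrite !mxE lt_def sumr_ge0 ?andbT; last by move=> k; apply: nn.
apply/negP => /eqP H0; move/eqP: wn0; apply; apply/matrixP => i j.
rewrite ord1 mxE.
have := psumr_eq0P nn H0 (i:=i) isT.
by rewrite !mxE -expr2 => /eqP; rewrite sqrf_eq0 => /eqP.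
Qed.

Lemma spd1 p : spd (1%:M : 'M[R]_p).
Proof. by split; [rewrite trmx1 | move=> v /vtv_pos; rewrite mulmx1]. Qed.

Definition colinj p q (M : 'M[R]_(p, q)) := forall v : 'cV_q, M *m v = 0 -> v = 0.

Lemma rank_colinj p q (M : 'M[R]_(p, q)) : \rank M = q -> colinj M.
Proof.
move=> rk v Mv; have rf : row_free M^T by rewrite /row_free mxrank_tr rk.
apply: trmx_inj; rewrite trmx0; apply/eqP; rewrite -(mulmx_free_eq0 _ rf).
by rewrite -trmx_mul Mv trmx0.
Qed.

Lemma spd_congr p q (A : 'M[R]_p) (M : 'M[R]_(p, q)) :
  spd A -> colinj M -> spd (M^T *m A *m M).
Proof.
move=> [At Ap] Mi; split.   by rewrite !trmx_mul trmxK -mulmxA; congr (_ *m (_ *m _)); exact: At.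
move=> v vn0; have Mvn0 : M *m v != 0 by apply/eqP => /Mi /eqP; rewrite (negbTE vn0).
by have := Ap _ Mvn0; rewrite !trmx_mul !mulmxA.
Qed.

Lemma spd_unit p (A : 'M[R]_p) : spd A -> A \in unitmx.
Proof.
move=> [At Ap]; rewrite -row_free_unit; apply: inj_row_free => v vA.
apply/eqP/negP => /negP vn0.
have : v^T != 0 by apply/eqP => /(congr1 trmx); rewrite trmxK trmx0; apply/eqP.
move=> /Ap; rewrite trmxK vA mul0mx mxE ltxx //.
Qed.

Lemma spd_colinj p (A : 'M[R]_p) : spd A -> colinj A.
Proof.
move=> /spd_unit uA v Av.
by rewrite -(mulKmx uA v) Av mulmx0.
Qed.

Lemma symK p (A : 'M[R]_p) : A^T = A -> forall q (w : 'M[R]_(p,q)), (A *m w)^T = w^T *m A.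
Proof. by move=> At q w; rewrite trmx_mul; congr (_ *m _); exact: At. Qed.

Lemma spd_inv p (A : 'M[R]_p) : spd A -> spd (invmx A).
Proof.
move=> sA; have uA := spd_unit sA; case: sA => At Ap.
split; first by rewrite trmx_inv; congr (invmx _); exact: At.
move=> v vn0; set w := invmx A *m v.
have wn0 : w != 0 by apply/eqP => w0; move/eqP: vn0; apply; rewrite -(mulKVmx uA v) -/w w0 mulmx0.
have -> : v = A *m w by rewrite /w mulKVmx.
have := Ap _ wn0; rewrite (symK At) -!mulmxA (mulmxA (invmx A)) mulVmx // mul1mx //.
Qed.

Lemma quad_ii p q (E : 'M[R]_(p, q)) (A : 'M[R]_p) i :
  ((col i E)^T *m A *m col i E) 0 0 = (E^T *m A *m E) i i.
Proof.
rewrite !colE trmx_mul trmx_delta -rowE !mulmxA -mulmxA -colE -row_mul !mxE.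
by apply: eq_bigr => k _; rewrite !mxE.
Qed.

Variables (n m : nat) (A : 'M[R]_n) (B X0 : 'M[R]_(n, m)).

Notation X := (bcgX A B X0).
Notation Rs := (bcgR A B X0).
Notation P := (bcgP A B X0).
Notation U := (bcgUps A B X0).

Lemma stepX j : X j.+1 = X j + P j *m U j.
Proof. by rewrite /bcgX /bcgUps /bcgP /bcgR /bcg_state iterS; case: (iter j _ _) => [[x r] p]. Qed.
Lemma stepR j : Rs j.+1 = Rs j - A *m P j *m U j.
Proof. by rewrite /bcgX /bcgUps /bcgP /bcgR /bcg_state iterS; case: (iter j _ _) => [[x r] p]. Qed.
Lemma stepP j : P j.+1 = Rs j.+1 + P j *m (invmx ((Rs j)^T *m Rs j) *m ((Rs j.+1)^T *m Rs j.+1)).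
Proof. by rewrite /bcgX /bcgUps /bcgP /bcgR /bcg_state iterS; case: (iter j _ _) => [[x r] p]. Qed.

Lemma resid j : Rs j = B - A *m X j.
Proof.
elim: j => [|j IH]; first by [].
by rewrite stepR stepX IH mulmxDr opprD addrA mulmxA.
Qed.

Hypothesis sA : spd A.

Lemma orth j : (forall i, (i < j)%N -> \rank (Rs i) = m) ->
  (P j)^T *m Rs j = (Rs j)^T *m Rs j.
Proof.
elim: j => [|j IH] Hr; first by [].
have IH' := IH (fun i hi => Hr i (ltnW hi)).
have rj := Hr j (ltnSn j).
set S := (Rs j)^T *m Rs j.
have sS : spd S by have := spd_congr (spd1 _) (rank_colinj rj); rewrite mulmx1.
have St : S^T = S by rewrite /S trmx_mul trmxK.
have Pi : colinj (P j).
  move=> v Pv; apply: (spd_colinj sS).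
  by rewrite -St /S -IH' trmx_mul trmxK -mulmxA Pv mulmx0.
have uG := spd_unit (spd_congr sA Pi).
rewrite stepP raddfD /= mulmxDl trmx_mul -mulmxA (_ : (P j)^T *m Rs j.+1 = 0) ?mulmx0 ?addr0 //.
rewrite stepR mulmxBr /bcgUps -/S !mulmxA mulmxV ?mul1mx ?IH' ?subrr //.
Qed.

Notation Th := (bcgTheta A B X0).
Notation Err := (bcgErr A B X0).

Lemma main j : (forall i, (i <= j)%N -> \rank (Rs i) = m) ->
  Err j = Th j + Err j.+1 /\ spd (Th j).
Proof.
move=> Hr.
have IH := orth (fun i hi => Hr i (ltnW hi)).
have rj := Hr j (leqnn j).
set S := (Rs j)^T *m Rs j.
have sS : spd S by have := spd_congr (spd1 _) (rank_colinj rj); rewrite mulmx1.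
have St : S^T = S by rewrite /S trmx_mul trmxK.
have Pi : colinj (P j).
  move=> v Pv; apply: (spd_colinj sS).
  by rewrite -St /S -IH trmx_mul trmxK -mulmxA Pv mulmx0.
have sG := spd_congr sA Pi.
set G := (P j)^T *m A *m P j.
have uG := spd_unit sG.
have Gt : G^T = G by case: sG.
have Git : (invmx G)^T = invmx G by rewrite trmx_inv Gt.
have uA := spd_unit sA.
have At : A^T = A by case: sA.
have HU : U j = invmx G *m S by [].
have HT : Th j = S *m (invmx G *m S) by [].
split; last first.
  rewrite HT mulmxA -{1}St; apply: spd_congr; first exact: spd_inv.
  exact: spd_colinj.
rewrite /bcgErr stepX.
set E := bcgXsol A B - X j.
have AE : A *m E = Rs j by rewrite /E mulmxBr mulmxA mulmxV // mul1mx resid.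
rewrite (_ : bcgXsol A B - (X j + P j *m U j) = E - P j *m U j); last first.
  by rewrite /E opprD addrA.
clearbody E.
have h1 : E^T *m A = (Rs j)^T by rewrite -AE (symK At).
have h2 : (Rs j)^T *m P j = S by rewrite -St /S -IH trmx_mul trmxK.
have h3 : (P j)^T *m A *m E = S by rewrite -mulmxA AE IH.
have h4 : (U j)^T = S *m invmx G by rewrite HU trmx_mul Git St.
have t1 : E^T *m A *m (P j *m U j) = Th j by rewrite h1 mulmxA h2.
have t2 : (P j *m U j)^T *m A *m E = Th j.
  by rewrite trmx_mul -!mulmxA AE IH h4 HT -!mulmxA.
have t3 : (P j *m U j)^T *m A *m (P j *m U j) = Th j.
  have -> : (P j *m U j)^T *m A *m (P j *m U j) = (U j)^T *m G *m U j.
    by rewrite trmx_mul /G !mulmxA.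
  by rewrite h4 mulmxKV // HU HT.
rewrite [(E - _)^T]raddfB /= !mulmxBl !mulmxBr t1 t2 t3.
by rewrite subrr subr0 addrC subrK.
Qed.
End H.

Lemma anorm_ge0 (R : realFieldType) p (A : 'M[R]_p) v : spd A -> 0 <= Anorm2 A v.
Proof.
move=> [_ Ap]; have [->|vn0] := eqVneq v 0.
  by rewrite /Anorm2 mulmx0 mxE.
by apply: ltW; apply: Ap.
Qed.

Lemma colB (R : realFieldType) p q (M N : 'M[R]_(p, q)) i : col i M - col i N = col i (M - N).
Proof. by apply/matrixP => a b; rewrite !mxE. Qed.

Theorem theorem1 (R : realFieldType) (n m : nat) (A : 'M[R]_n)
  (B X0 : 'M[R]_(n, m)) (k : nat) :
  spd A ->
  (1 <= k)%N ->
  (forall j : nat, (j < k)%N -> \rank (bcgR A B X0 j) = m) ->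
  [/\ bcgErr A B X0 k.-1 = bcgTheta A B X0 k.-1 + bcgErr A B X0 k,
      spd (bcgTheta A B X0 k.-1)
    & forall i : 'I_m,
        Anorm2 A (col i (bcgXsol A B) - col i (bcgX A B X0 k.-1))
          = bcgTheta A B X0 k.-1 i i
            + Anorm2 A (col i (bcgXsol A B) - col i (bcgX A B X0 k))
        /\ bcgTheta A B X0 k.-1 i i
             <= Anorm2 A (col i (bcgXsol A B) - col i (bcgX A B X0 k.-1))
        /\ 0 < bcgTheta A B X0 k.-1 i i].
Proof.
move=> sA k1 Hr; case: k k1 Hr => [//|j] _ Hr /=.
have [HE HS] := main sA (fun i hi => Hr i (hi : (i < j.+1)%N)).
split => // i.
have e1 : Anorm2 A (col i (bcgXsol A B) - col i (bcgX A B X0 j)) = bcgErr A B X0 j i i.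
  by rewrite colB /Anorm2 quad_ii.
have e2 : Anorm2 A (col i (bcgXsol A B) - col i (bcgX A B X0 j.+1)) = bcgErr A B X0 j.+1 i i.
  by rewrite colB /Anorm2 quad_ii.
have pos : 0 < bcgTheta A B X0 j i i.
  case: HS => _ Tp.
  have cn0 : col i (1%:M : 'M[R]_m) != 0.
    apply/eqP => /matrixP /(_ i 0); rewrite !mxE eqxx /= => /eqP; rewrite oner_eq0.
    done.
  by have := Tp _ cn0; rewrite quad_ii trmx1 mul1mx mulmx1.
rewrite e1 e2 HE mxE; split => //; split => //.
by rewrite lerDl -e2 anorm_ge0.
Qed.
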